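(* Let $n\ge 2$, let $w(A,B)\in\mathbb F_2=\langle A,B\rangle$ be any word and $m=(m_1,\dots,m_{n-1})$ any tuple of integers. Then $\operatorname{Ker}(\Theta_n^{w,m})\le FVP_n\cap FVK_n$.
   Context: For $n\ge 2$, the flat virtual braid group $FVB_n$ is the group with generators $\sigma_1,\dots,\sigma_{n-1},\rho_1,\dots,\rho_{n-1}$ and defining relations: $\sigma_i^2=1$, $\rho_i^2=1$ for $1\le i\le n-1$; $\sigma_i\sigma_{i+1}\sigma_i=\sigma_{i+1}\sigma_i\sigma_{i+1}$, $\rho_i\rho_{i+1}\rho_i=\rho_{i+1}\rho_i\rho_{i+1}$ and $\rho_i\rho_{i+1}\sigma_i=\sigma_{i+1}\rho_i\rho_{i+1}$ for $1\le i\le n-2$; $\sigma_i\sigma_j=\sigma_j\sigma_i$, $\rho_i\rho_j=\rho_j\rho_i$ and $\rho_i\sigma_j=\sigma_j\rho_i$ for $|i-j|\ge 2$. $\mathbb F_{2n}$ is the free group on $x_1,\dots,x_n,y_1,\dots,y_n$; automorphisms compose left to right, $(\varphi\psi)(f)=\psi(\varphi(f))$, and generators not mentioned in the description of an automorphism are fixed. For $w(A,B)\in\mathbb F_2=\langle A,B\rangle$ and $m\in\mathbb Z^{n-1}$, $\Theta_n^{w,m}\colon FVB_n\to\mathrm{Aut}(\mathbb F_{2n})$ is the homomorphism given by $\Theta_n^{w,m}(\sigma_i): x_i\mapsto x_{i+1}a_i,\ x_{i+1}\mapsto x_i a_i^{-1}$, where $a_i=y_{i+1}^{m_2+\dots+m_i}\,w(y_i,y_{i+1})\,y_i^{-(m_1+\dots+m_{i-1})}$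 (empty sums are $0$, so $a_1=w(y_1,y_2)$); $\Theta_n^{w,m}(\rho_i): x_i\mapsto x_{i+1}y_{i+1}^{m_i},\ x_{i+1}\mapsto x_iy_i^{-m_i},\ y_i\mapsto y_{i+1},\ y_{i+1}\mapsto y_i$. Let $S_n=\langle\sigma_1,\dots,\sigma_{n-1}\rangle\le FVB_n$ and $S_n'=\langle\rho_1,\dots,\rho_{n-1}\rangle\le FVB_n$ (each isomorphic to the symmetric group). $\pi_n\colon FVB_n\to S_n$ is the homomorphism with $\pi_n(\sigma_i)=\pi_n(\rho_i)=\sigma_i$, and $FVP_n=\operatorname{Ker}\pi_n$ (flat virtual pure braid group). $\nu_n\colon FVB_n\to S_n'$ is the homomorphism with $\nu_n(\sigma_i)=1$, $\nu_n(\rho_i)=\rho_i$, and $FVK_n=\operatorname{Ker}\nu_n$ (flat virtual kure braid group). *)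

(* Defs.v *)
From HB Require Import structures.
From mathcomp Require Import all_boot all_order all_algebra all_fingroup.
Set Implicit Arguments. Unset Strict Implicit. Unset Printing Implicit Defensive.
Import GRing.Theory Num.Theory.

(* Free group F_{2n} on x_1..x_n, y_1..y_n (0-based indices 'I_n).
   letter: (false, i) = x_{i+1}, (true, i) = y_{i+1}.
   signed letter: (l, false) = l, (l, true) = l^{-1}.
   Elements of F_{2n} are represented by words; [reduce] computes the
   freely reduced normal form. *)
Section FVB.
Variable n : nat.

Definition letter := (bool * 'I_n)%type.
Definition sletter := (letter * bool)%type.
Definition fword := seq sletter.

Definition sinv (a : sletter) : sletter := (a.1, ~~ a.2).
Definition cons_red (a : sletter) (r : fword) : fword :=
  if r is b :: r' then (if b == sinv a then r' else a :: r) else [:: a].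
Definition reduce (s : fword) : fword := foldr cons_red [::] s.
Definition winv (s : fword) : fword := rev (map sinv s).
Definition gen (l : letter) : fword := [:: (l, false)].
Definition ypow (i : 'I_n) (k : int) : fword := nseq (absz k) ((true, i), (k < 0)%R).

Definition endo := letter -> fword.
Definition apply_endo (e : endo) (s : fword) : fword :=
  reduce (flatten (map (fun a : sletter => if a.2 then winv (e a.1) else e a.1) s)).

(* a word w(A,B) in F_2 = <A,B>: (false,_) = A, (true,_) = B; second
   component true = inverse *)
Definition subst2 (w : seq (bool * bool)) (a b : letter) : fword :=
  map (fun c : bool * bool => ((if c.1 then b else a), c.2)) w.

(* the generators sigma_i, rho_i (1 <= i <= n-1) are indexed by j : 'I_n.-1,
   with i = j+1; lo j = index of x_i / y_i, hi j = index of x_{i+1} / y_{i+1} *)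
Lemma lo_lt (j : 'I_n.-1) : (j < n)%N.
Proof. case: j => j /= hj; case: n hj => //= n' hj; exact: ltnW. Qed.
Lemma hi_lt (j : 'I_n.-1) : (j.+1 < n)%N.
Proof. case: j => j /= hj; case: n hj => //= n' hj. Qed.
Definition lo (j : 'I_n.-1) : 'I_n := Ordinal (lo_lt j).
Definition hi (j : 'I_n.-1) : 'I_n := Ordinal (hi_lt j).

Variables (w : seq (bool * bool)) (m : seq int).
(* m = (m_1, ..., m_{n-1}) with m_k = m`_(k-1) *)

Definition a_elt (j : 'I_n.-1) : fword :=
  let S1 := (\sum_(1 <= k < j.+1) m`_k)%R in      (* m_2 + ... + m_i *)
  let S2 := (\sum_(0 <= k < j) m`_k)%R in         (* m_1 + ... + m_{i-1} *)
  ypow (hi j) S1 ++ subst2 w (true, lo j) (true, hi j) ++ ypow (lo j) (- S2)%R.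

Definition Theta_sigma (j : 'I_n.-1) : endo := fun l =>
  if l == (false, lo j) then gen (false, hi j) ++ a_elt j
  else if l == (false, hi j) then gen (false, lo j) ++ winv (a_elt j)
  else gen l.

Definition Theta_rho (j : 'I_n.-1) : endo := fun l =>
  if l == (false, lo j) then gen (false, hi j) ++ ypow (hi j) m`_j
  else if l == (false, hi j) then gen (false, lo j) ++ ypow (lo j) (- m`_j)%R
  else if l == (true, lo j) then gen (true, hi j)
  else if l == (true, hi j) then gen (true, lo j)
  else gen l.

(* generators of FVB_n: (false, j) = sigma_{j+1}, (true, j) = rho_{j+1}.
   Since all generators are involutions, every element of FVB_n is a
   positive word in the generators. *)
Definition fvb_gen := (bool * 'I_n.-1)%type.

Definition Theta_gen (g : fvb_gen) : endo :=
  if g.1 then Theta_rho g.2 else Theta_sigma g.2.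

(* Theta(g_1 ... g_k), composed left to right: (phi psi)(f) = psi(phi(f)) *)
Definition Theta_act (u : seq fvb_gen) (f : fword) : fword :=
  foldl (fun f g => apply_endo (Theta_gen g) f) f u.

Definition in_ker_Theta (u : seq fvb_gen) : Prop :=
  forall l : letter, Theta_act u (gen l) = gen l.

Definition pi_n (u : seq fvb_gen) : {perm 'I_n} :=
  (\prod_(g <- u) tperm (lo g.2) (hi g.2))%g.
Definition nu_n (u : seq fvb_gen) : {perm 'I_n} :=
  (\prod_(g <- u) (if g.1 then tperm (lo g.2) (hi g.2) else 1))%g.

End FVB.

(* Main.v *)
Require Import Defs.
From mathcomp Require Import all_boot all_order all_algebra all_fingroup.
Set Implicit Arguments. Unset Strict Implicit.

Section Aux.
Variable n : nat.
Definition yw (s : fword n) := all (fun a : sletter n => a.1.1) s.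

Lemma yw_cat (s t : fword n) : yw s -> yw t -> yw (s ++ t).
Proof. by rewrite /yw all_cat => -> ->. Qed.

Lemma yw_winv (s : fword n) : yw s -> yw (winv s).
Proof. by rewrite /yw /winv all_rev all_map; apply: sub_all => a. Qed.

Lemma yw_reduce (s : fword n) : yw s -> yw (reduce s).
Proof.
elim: s => //= a s IH /andP[ha hs]; rewrite /cons_red.
case E: (reduce s) (IH hs) => [|b r] /=; first by rewrite ha.
move=> /andP[hb hr]; case: ifP => _ //=; by rewrite ha hb hr.
Qed.

Lemma reduce_x (k : 'I_n) (s : fword n) : yw s ->
  reduce (((false, k), false) :: s) = ((false, k), false) :: reduce s.
Proof.
move=> hs /=; rewrite /cons_red.
case E: (reduce s) (yw_reduce hs) => [|b r] //= /andP[hb _].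
by case: ifP => // /eqP Hb; move: hb; rewrite Hb.
Qed.

Lemma cons_red_x (k : 'I_n) (s : fword n) : yw s ->
  cons_red ((false, k), false) (reduce s) = ((false, k), false) :: reduce s.
Proof. exact: reduce_x. Qed.

Lemma yw_ypow i k : yw (ypow i k).
Proof. by rewrite /yw /ypow; apply/allP => a /nseqP[-> _]. Qed.

Variables (w : seq (bool * bool)) (m : seq int).

Lemma yw_a j : yw (a_elt w m j).
Proof.
rewrite /a_elt; apply: yw_cat; first exact: yw_ypow.
apply: yw_cat; last exact: yw_ypow.
by rewrite /yw /subst2 all_map; apply/allP => c _ /=; case: ifP.
Qed.

Lemma gen_x (g : fvb_gen n) (k : 'I_n) : exists Y, yw Y /\
  Theta_gen w m g (false, k) = ((false, tperm (lo g.2) (hi g.2) k), false) :: Y.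
Proof.
case: g => [[] j]; rewrite /Theta_gen /Theta_rho /Theta_sigma /= !xpair_eqE /=.
- case: (k =P lo j) => [->|h1]; first by exists (ypow (hi j) m`_j); rewrite tpermL yw_ypow.
  case: (k =P hi j) => [->|h2]; first by exists (ypow (lo j) (- m`_j)%R); rewrite tpermR yw_ypow.
  exists [::]; split => //; rewrite tpermD //.
    by apply/eqP => h; apply: h1; rewrite h.
  by apply/eqP => h; apply: h2; rewrite h.
- case: (k =P lo j) => [->|h1]; first by exists (a_elt w m j); rewrite tpermL yw_a.
  case: (k =P hi j) => [->|h2]; first by exists (winv (a_elt w m j)); rewrite tpermR yw_winv // yw_a.
  exists [::]; split => //; rewrite tpermD //.
    by apply/eqP => h; apply: h1; rewrite h.
  by apply/eqP => h; apply: h2; rewrite h.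
Qed.

Lemma gen_y (g : fvb_gen n) (i : 'I_n) :
  Theta_gen w m g (true, i) =
  [:: ((true, (if g.1 then tperm (lo g.2) (hi g.2) else 1%g) i), false)].
Proof.
case: g => [[] j]; rewrite /Theta_gen /Theta_rho /Theta_sigma /= ?xpair_eqE /=.
- case: (i =P lo j) => [->|h1]; first by rewrite tpermL.
  case: (i =P hi j) => [->|h2]; first by rewrite tpermR.
  rewrite tpermD //.
    by apply/eqP => h; apply: h1; rewrite h.
  by apply/eqP => h; apply: h2; rewrite h.
- by rewrite perm1.
Qed.

Lemma gen_y_yw (g : fvb_gen n) (i : 'I_n) : yw (Theta_gen w m g (true, i)).
Proof. by rewrite gen_y. Qed.

Lemma flat_yw (e : endo n) (Y : fword n) : (forall i, yw (e (true, i))) -> yw Y ->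
  yw (flatten (map (fun a : sletter n => if a.2 then winv (e a.1) else e a.1) Y)).
Proof.
move=> he; elim: Y => //= a Y IH /andP[ha hY]; apply: yw_cat; last exact: IH.
case: a ha => [[[] i] b] //= _; case: b => //; exact: yw_winv.
Qed.

Lemma act_cons (u : seq (fvb_gen n)) g f :
  Theta_act w m (g :: u) f = Theta_act w m u (apply_endo (Theta_gen w m g) f).
Proof. by []. Qed.

Lemma act_x (u : seq (fvb_gen n)) (k : 'I_n) (Y : fword n) : yw Y ->
  exists Z, yw Z /\ Theta_act w m u (((false, k), false) :: Y) =
     ((false, pi_n u k), false) :: Z.
Proof.
elim: u k Y => [|g u IH] k Y hY.
  by exists Y; rewrite /pi_n big_nil perm1.
rewrite act_cons.
have [Y' [hY' GX]] := gen_x g k.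
rewrite /apply_endo /= GX /= cons_red_x; last first.
  apply: yw_cat => //; apply: flat_yw => // i; exact: gen_y_yw.
have hR := yw_reduce (yw_cat hY' (flat_yw (gen_y_yw g) hY)).
have [Z [hZ ->]] := IH (tperm (lo g.2) (hi g.2) k) _ hR.
by exists Z; rewrite /pi_n big_cons permM.
Qed.

Lemma act_y (u : seq (fvb_gen n)) (i : 'I_n) :
  Theta_act w m u (gen (true, i)) = gen (true, nu_n u i).
Proof.
elim: u i => [|g u IH] i; first by rewrite /nu_n big_nil perm1.
rewrite act_cons /apply_endo /= gen_y cats0 /=.
by rewrite IH /nu_n big_cons permM.
Qed.
End Aux.

Theorem lemma3p1 (n : nat) (hn : (2 <= n)%N) (w : seq (bool * bool))
  (m : seq int) (hm : size m = n.-1) (u : seq (fvb_gen n)) :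
  in_ker_Theta w m u -> pi_n u = 1%g /\ nu_n u = 1%g.
Proof.
move=> hK; split; apply/permP => i; rewrite perm1.
- have := hK (false, i); have [Z [_ ->]] := act_x w m u i (isT : yw (@nil (sletter n))).
  by case.
- by have := hK (true, i); rewrite act_y => -[].
Qed.
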